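(* Let $R$ be an atomic, integrally closed integral domain satisfying condition (C): whenever $I=(a_0,a_1)$ is a primitive ideal of $R$ generated by two elements, there exists an irreducible element $\alpha\in R$ with $\alpha\in I_v$. Then $R$ is a half-factorial domain if and only if $R$ has the Z-property.
   Context: Let $K$ be the quotient field of $R$. For a fractional ideal $I$, $I^{-1}=\{t\in K : tI\subseteq R\}$ and $I_v=(I^{-1})^{-1}$. A polynomial $f\in R[x]$ is primitive if its coefficients have no common nonunit divisor in $R$; a primitive ideal is an ideal $I\subseteq R$ equal to the ideal generated by the coefficients of some primitive polynomial $f\in R[x]$. A half-factorial domain is an atomic domain in which any two factorizations of a nonzero nonunit into irreducible elements have the same length. For $a,b\in R$, $[a,b]\neq 1$ means $a$ and $b$ have a common nonunit divisor, and $[a,b]=1$ means they do not. $R$ has the Z-property if whenever $a,b,c,d,e$ are nonzero nonunits of $R$ with $abc=de$, then $[ab,d]\neq 1$ or $[ab,e]\neq 1$. *)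

(* Defs.v *)
From HB Require Import structures.
From mathcomp Require Import all_boot all_order all_algebra.
From mathcomp Require Import fraction.
Set Implicit Arguments. Unset Strict Implicit. Unset Printing Implicit Defensive.
Import Order.TTheory GRing.Theory Num.Theory.
Local Open Scope ring_scope.

Section Defs.
Variable R : idomainType.

Definition K := {fraction R}.
Definition toK (x : R) : K := @FracField.tofrac R x.
Definition inR (t : K) : Prop := exists r : R, t = toK r.

Definition dvdR (a b : R) : Prop := exists c : R, b = c * a.

(* [a,b] <> 1 : a and b have a common nonunit divisor *)
Definition has_common_nonunit (a b : R) : Prop :=
  exists z : R, z \isn't a GRing.unit /\ dvdR z a /\ dvdR z b.

Definition irreducible_elt (a : R) : Prop :=
  a != 0 /\ a \isn't a GRing.unit /\
  forall b c : R, a = b * c -> b \is a GRing.unit \/ c \is a GRing.unit.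

Definition factorization (x : R) (s : seq R) : Prop :=
  (forall y, y \in s -> irreducible_elt y) /\ \prod_(y <- s) y = x.

Definition atomic : Prop :=
  forall x : R, x != 0 -> x \isn't a GRing.unit -> exists s, factorization x s.

Definition half_factorial : Prop :=
  atomic /\
  forall x : R, x != 0 -> x \isn't a GRing.unit ->
    forall s t, factorization x s -> factorization x t -> size s = size t.

Definition integrally_closed : Prop :=
  forall t : K, (exists p : {poly R}, p \is monic /\ root (map_poly toK p) t) -> inR t.

Definition in_ideal_gen (s : seq R) (x : R) : Prop :=
  exists r : nat -> R, x = \sum_(i < size s) r i * s`_i.

Definition primitive_poly (f : {poly R}) : Prop :=
  forall d : R, (forall i, dvdR d f`_i) -> d \is a GRing.unit.

Definition primitive_ideal (I : R -> Prop) : Prop :=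
  exists f : {poly R}, primitive_poly f /\
    forall x, I x <-> in_ideal_gen (polyseq f) x.

Definition ideal_inv (I : R -> Prop) (t : K) : Prop :=
  forall a, I a -> inR (t * toK a).

Definition ideal_v (I : R -> Prop) (u : K) : Prop :=
  forall t, ideal_inv I t -> inR (u * t).

Definition condition_C : Prop :=
  forall a0 a1 : R, primitive_ideal (in_ideal_gen [:: a0; a1]) ->
    exists alpha : R, irreducible_elt alpha /\
      ideal_v (in_ideal_gen [:: a0; a1]) (toK alpha).

Definition nonzero_nonunit (x : R) : Prop := x != 0 /\ x \isn't a GRing.unit.

Definition Z_property : Prop :=
  forall a b c d e : R,
    nonzero_nonunit a -> nonzero_nonunit b -> nonzero_nonunit c ->
    nonzero_nonunit d -> nonzero_nonunit e ->
    a * b * c = d * e ->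
    has_common_nonunit (a * b) d \/ has_common_nonunit (a * b) e.

End Defs.

(* Main.v *)
Require Import Defs.
From mathcomp Require Import all_boot all_algebra.
From mathcomp Require Import fraction ring zify.
From Stdlib Require Import Classical Lia.
Import GRing.Theory.
Set Implicit Arguments.
Local Open Scope ring_scope.


Lemma prod_atoms_unit (R : idomainType) (s : seq R) :
  (forall y, y \in s -> irreducible_elt y) ->
  (\prod_(y <- s) y) \is a GRing.unit -> s = [::].
Proof.
case: s => [//|x s] Hs; rewrite big_cons unitrM => /andP [Hx _].
by have [_ [/negP Hn _]] := Hs x (mem_head _ _).
Qed.

Lemma prod_atoms_neq0 (R : idomainType) (s : seq R) :
  (forall y, y \in s -> irreducible_elt y) -> (\prod_(y <- s) y) != 0.
Proof.
elim: s => [|x s IH] Hs; first by rewrite big_nil oner_neq0.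
rewrite big_cons mulf_neq0 //; first by have [] := Hs x (mem_head _ _).
by apply: IH => y Hy; apply: Hs; rewrite in_cons Hy orbT.
Qed.

Lemma unit_neq0 (R : idomainType) (u : R) : u \is a GRing.unit -> u != 0.
Proof. by move=> Hu; apply/eqP => u0; rewrite u0 unitr0 in Hu. Qed.

Lemma irr_assoc (R : idomainType) (u a : R) :
  u \is a GRing.unit -> irreducible_elt a -> irreducible_elt (u * a).
Proof.
move=> Hu [Ha0 [Hau Hf]]; split; first by rewrite mulf_neq0 // unit_neq0.
split; first by rewrite unitrM Hu.
move=> b c Hbc.
have : a = (u^-1 * b) * c by rewrite -mulrA -Hbc mulKr.
case/Hf => [H|H]; last by right.
by left; rewrite -(mulVKr Hu b) unitrM Hu.
Qed.

Lemma factor_nonunit (R : idomainType) (x : R) :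
  atomic R -> x != 0 -> x \isn't a GRing.unit ->
  exists s, factorization x s /\ (0 < size s)%N.
Proof.
move=> Hat Hx Hu; have [s [Hs Hp]] := Hat x Hx Hu.
exists s; split => //; case: s Hs Hp => [|//] _ Hp.
by move: Hu; rewrite -Hp big_nil unitr1.
Qed.



Lemma fld_aux (F : fieldType) (e p r0 d r1 : F) : p != 0 ->
  e / p * (r0 * d + r1 * p) = r0 * (e * d / p) + r1 * e.
Proof. by move=> Hp; field. Qed.

Lemma transform (R : idomainType) (a b c d e : R) :
  condition_C R -> nonzero_nonunit a -> nonzero_nonunit b ->
  nonzero_nonunit c -> nonzero_nonunit d -> nonzero_nonunit e ->
  a * b * c = d * e ->
  ~ has_common_nonunit (a * b) d -> ~ has_common_nonunit (a * b) e ->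
  exists w al, irreducible_elt al /\ a * b * w = al * e /\
    nonzero_nonunit w /\ ~ has_common_nonunit (a * b) al.
Proof.
move=> HC [a0 au] [b0 bu] [c0 cu] [d0 du] [e0 eu] Habc Hpd Hpe.
set p := a * b in Habc Hpd Hpe *.
have p0 : p != 0 by rewrite mulf_neq0.
have pu : p \isn't a GRing.unit by rewrite unitrM negb_and au.
have Hpdef : p = a * b by [].
clearbody p.
have Hprim : primitive_ideal (in_ideal_gen [:: d; p]).
  have Hs : polyseq (Poly [:: d; p]) = [:: d; p] by rewrite (@PolyK _ 0).
  
  exists (Poly [:: d; p]); split; last by move=> x; rewrite Hs.
  move=> z Hz; case Hzu: (z \is a GRing.unit) => //; exfalso; apply: Hpd.
  exists z; split; first by rewrite Hzu.
  by split; [have := Hz 1%N | have := Hz 0%N]; rewrite Hs.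
have [al [Hal Hv]] := HC d p Hprim.
have Hinv : ideal_inv (in_ideal_gen [:: d; p]) (toK e / toK p).
  move=> x [r ->]; rewrite big_ord_recl big_ord1 /=.
  exists (r 0%N * c + r 1%N * e).
  have Hp : toK p != 0 by rewrite /toK tofrac_eq0.
  have Hc : toK c = toK e * toK d / toK p.
    have H1 : toK p * toK c = toK d * toK e by rewrite /toK -!rmorphM /= Habc.
    by rewrite [toK e * _]mulrC -H1 [RHS]mulrC mulKf.
  rewrite /toK !rmorphD !rmorphM /= -!/(toK _) Hc.
  exact: fld_aux.
have [w Hw] := Hv _ Hinv.
have Hew : al * e = w * p.
  apply/eqP; rewrite -tofrac_eq !rmorphM /= -!/(toK _) -Hw.
  by rewrite -mulrA divfK // /toK tofrac_eq0.
have [al0 [alu Half]] := Hal.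
have w0 : w != 0.
  by apply/eqP => w0; move: Hew; rewrite w0 mul0r => /eqP; rewrite mulf_eq0 (negbTE al0) (negbTE e0).
exists w, al; split => //; split; first by rewrite mulrC Hew.
split.
  split => //; apply/negP => wu; apply: Hpe; exists e; split => //.
  split; last by exists 1; rewrite mul1r.
  by exists (al * w^-1); rewrite mulrAC Hew mulrC mulKr.
move=> [z [zu [[y Hy] [k Hk]]]].
have ku : k \is a GRing.unit by case: (Half _ _ Hk) => // H; rewrite H in zu.
have z0 : z != 0 by apply/eqP => z0; move: al0; rewrite Hk z0 mulr0 eqxx.
apply: Hpe; exists (k^-1 * y); split.
  apply/negP => gu; have : irreducible_elt (a * b).
    rewrite -Hpdef; have -> : p = (k^-1 * y) * al.
      by rewrite Hy Hk [k^-1 * y]mulrC -mulrA mulKr.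
    by apply: irr_assoc.
  by move=> [_ [_ Hf]]; case: (Hf a b erefl) => H; [move: au | move: bu]; rewrite H.
split.
  by exists al; rewrite Hy Hk [k * z]mulrC -mulrA mulVKr // mulrC.
have H2 : z * (k * e) = z * (w * y).
  by rewrite mulrCA mulrA -Hk Hew Hy mulrA mulrC.
have H3 := mulfI z0 H2.
by exists w; rewrite -(mulKr ku e) H3 mulrCA.
Qed.



Lemma hfd_Z (R : idomainType) : condition_C R -> half_factorial R -> Z_property R.
Proof.
move=> HC [Hat Hhf] a b c d e Ha Hb Hc Hd He Habc.
case: (classic (has_common_nonunit (a * b) d)) => Hd'; first by left.
case: (classic (has_common_nonunit (a * b) e)) => He'; first by right.
exfalso.
have [w [al [Hal [E1 [Hw Hna]]]]] := transform HC Ha Hb Hc Hd He Habc Hd' He'.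
have Hal' : nonzero_nonunit al by case: Hal => [? [? _]].
have E1' : a * b * w = e * al by rewrite E1 mulrC.
have [w2 [be [Hbe [E2 [Hw2 _]]]]] := transform HC Ha Hb Hw He Hal' E1' He' Hna.
case: Ha => a0 au; case: Hb => b0 bu; case: Hw2 => w0 wu.
have [sa [[Hsa Psa] Ssa]] := @factor_nonunit _ a Hat a0 au.
have [sb [[Hsb Psb] Ssb]] := @factor_nonunit _ b Hat b0 bu.
have [sw [[Hsw Psw] Ssw]] := @factor_nonunit _ w2 Hat w0 wu.
have [be0 [beu _]] := Hbe.
have x0 : be * al != 0 by rewrite -E2 !mulf_neq0.
have xu : be * al \isn't a GRing.unit by rewrite unitrM negb_and beu.
have := Hhf _ x0 xu (sa ++ sb ++ sw) [:: be; al].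
rewrite !size_cat /=.
have H1 : factorization (be * al) (sa ++ sb ++ sw).
  split; last by rewrite !big_cat /= Psa Psb Psw mulrA.
  by move=> y; rewrite !mem_cat => /or3P [/Hsa|/Hsb|/Hsw].
have H2 : factorization (be * al) [:: be; al].
  split; last by rewrite !big_cons big_nil mulr1.
  by move=> y; rewrite !inE => /orP [/eqP ->|/eqP ->].
move=> /(_ H1 H2); lia.
Qed.



Definition atoms {R : idomainType} (s : seq R) := forall y, y \in s -> irreducible_elt y.

Definition bad (R : idomainType) (n : nat) := exists (s t : seq R) (u : R),
  atoms s /\ atoms t /\ u \is a GRing.unit /\
  \prod_(y <- s) y = u * \prod_(y <- t) y /\ size t = n /\ size s <> n.

Lemma eqlen_of (R : idomainType) (n : nat) :
  (forall m, (m < n)%N -> ~ bad R m) ->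
  forall (s t : seq R) u, atoms s -> atoms t -> u \is a GRing.unit ->
  \prod_(y <- s) y = u * \prod_(y <- t) y ->
  (size t < n)%N || (size s < n)%N -> size s = size t.
Proof.
move=> IH s t u Hs Ht Hu E /orP [H|H].
  case: (size s =P size t) => // Hne; exfalso.
  by apply: (IH _ H); exists s, t, u.
case: (size t =P size s) => // Hne; exfalso.
apply: (IH _ H); exists t, s, u^-1; do 3 (split; first by rewrite ?unitrV).
by rewrite E mulKr.
Qed.

Lemma atoms_cons (R : idomainType) (x : R) s : atoms (x :: s) <-> irreducible_elt x /\ atoms s.
Proof.
split.
  move=> H; split; first by apply: H; rewrite mem_head.
  by move=> y Hy; apply: H; rewrite in_cons Hy orbT.
move=> [Hx Hs] y; rewrite in_cons => /orP [/eqP ->|]; [exact: Hx| exact: Hs].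
Qed.

Lemma atoms_cat (R : idomainType) (s t : seq R) : atoms s -> atoms t -> atoms (s ++ t).
Proof. by move=> Hs Ht y; rewrite mem_cat => /orP [/Hs|/Ht]. Qed.

Lemma divA (R : idomainType) (n : nat) :
  atomic R -> (forall m, (m < n)%N -> ~ bad R m) ->
  forall (t1 : seq R) pi yy, atoms t1 -> (size t1 < n)%N -> irreducible_elt pi ->
  \prod_(y <- t1) y = pi * yy ->
  exists w sy, w \is a GRing.unit /\ atoms sy /\ yy = w * \prod_(y <- sy) y /\
    (size sy).+1 = size t1.
Proof.
move=> Hat IH t1 pi yy Ht1 Hn Hpi E.
have yy0 : yy != 0.
  by apply/eqP => y0; move: (prod_atoms_neq0 _ Ht1); rewrite E y0 mulr0 eqxx.
case Hyu: (yy \is a GRing.unit).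
  exists yy, [::]; split => //; split; first by [].
  split; first by rewrite big_nil mulr1.
  have := @eqlen_of R n IH [:: pi] t1 yy^-1.
  move=> /(_ _ Ht1); rewrite unitrV Hyu /= big_cons big_nil mulr1 E [pi * yy]mulrC mulKr //.
  apply => //; last by rewrite Hn.
  by move=> y; rewrite inE => /eqP ->.
have [sy [Hsy Psy]] := Hat yy yy0 (negbT Hyu).
exists 1, sy; split; first exact: unitr1.
split => //; split; first by rewrite mul1r Psy.
have := @eqlen_of R n IH (pi :: sy) t1 1.
rewrite big_cons Psy mul1r E => /(_ _ Ht1 (unitr1 _) erefl); rewrite Hn /=; apply => //.
by apply/atoms_cons.
Qed.



Lemma no_bad (R : idomainType) : atomic R -> Z_property R -> forall n, ~ bad R n.
Proof.
move=> Hat HZ n; elim/ltn_ind: n => n IH [s [t [u [Hs [Ht [Hu [E [Hsz Hne]]]]]]]].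
have EL := @eqlen_of R n IH.
have Hm : (n < size s)%N.
  case: (ltngtP n (size s)) => // H; last by exfalso; apply: Hne.
  by exfalso; apply: Hne; rewrite -Hsz; apply: (EL s t u) => //; rewrite H orbT.
case: t Ht E Hsz => [|q t'] Ht E Hsz.
  have : s = [::] by apply: (prod_atoms_unit _ Hs); rewrite E big_nil mulr1.
  by move=> Hs0; move: Hm; rewrite Hs0 -Hsz.
have [Hq Ht'] := iffLR (atoms_cons _ _ _) Ht.
set q0 := u * q.
have Hq0 : irreducible_elt q0 by apply: irr_assoc.
have E' : \prod_(y <- s) y = q0 * \prod_(y <- t') y by rewrite E big_cons mulrA.
case: s Hs E' Hm {E Hne} => [|p1 [|p2 s']] Hs E' Hm.
- by [].
- by move: Hm; rewrite -Hsz.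
have [Hp1 Hs1] := iffLR (atoms_cons _ _ _) Hs.
have [Hp2 Hs'] := iffLR (atoms_cons _ _ _) Hs1.
have [p10 [p1u Hp1f]] := Hp1.
have [p20 [p2u Hp2f]] := Hp2.
have [q00 [q0u Hq0f]] := Hq0.
rewrite !big_cons mulrA in E'.
case: t' Ht' E' Hsz {Ht} => [|q1 t''] Ht' E' Hsz.
  rewrite big_nil mulr1 in E'.
  have E2 : q0 = p1 * (p2 * \prod_(y <- s') y) by rewrite -E' mulrA.
  case: (Hq0f _ _ E2) => H; first by rewrite H in p1u.
  by move: p2u; rewrite unitrM in H; case/andP: H => ->.
set t' := q1 :: t'' in Ht' E' Hsz.
have p120 : p1 * p2 != 0 by rewrite mulf_neq0.
have p12u : p1 * p2 \isn't a GRing.unit by rewrite unitrM negb_and p1u.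
have Hsp : (0 < size s')%N by move: Hm; rewrite -Hsz /=; lia.
have c0 : \prod_(y <- s') y != 0 by apply: prod_atoms_neq0.
have cu : \prod_(y <- s') y \isn't a GRing.unit.
  by apply/negP => /(prod_atoms_unit _ Hs') Hs0; move: Hsp; rewrite Hs0.
have e0 : \prod_(y <- t') y != 0 by apply: prod_atoms_neq0.
have eu : \prod_(y <- t') y \isn't a GRing.unit.
  by apply/negP => /(prod_atoms_unit _ Ht').
have HZ' := HZ p1 p2 _ q0 _ (conj p10 p1u) (conj p20 p2u) (conj c0 cu) (conj q00 q0u) (conj e0 eu) E'.
have [t1 [t2 [Ht1 [Ht2 [Hs12 [Hs1lt [Hs1gt [E12 Hcn]]]]]]]] :
  exists t1 t2 : seq R, atoms t1 /\ atoms t2 /\ (size t1 + size t2)%N = n /\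
    (0 < size t1)%N /\ (size t1 < n)%N /\
    \prod_(y <- t1) y * \prod_(y <- t2) y = q0 * \prod_(y <- t') y /\
    has_common_nonunit (p1 * p2) (\prod_(y <- t1) y).
  case: HZ' => H.
    exists [:: q0], t'; split; first by apply/atoms_cons.
    split => //; split; first by rewrite -Hsz.
    split => //; split; first by rewrite -Hsz.
    by rewrite big_seq1.
  exists t', [:: q0]; split => //; split; first by apply/atoms_cons.
  split; first by rewrite -Hsz /= addn1.
  split => //; split; first by rewrite -Hsz.
  by rewrite big_seq1 mulrC.
have [z [zu [[y Hy] [k Hk]]]] := Hcn.
have z0 : z != 0 by apply/eqP => z0; move: p120; rewrite Hy z0 mulr0 eqxx.
have [[|pi sz'] [[Hszz Psz] Hszl]] := @factor_nonunit _ z Hat z0 zu; first by [].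
have [Hpi Hsz'] := iffLR (atoms_cons _ _ _) Hszz.
rewrite big_cons in Psz.
have Hv : p1 * p2 = pi * (y * \prod_(x <- sz') x) by rewrite Hy -Psz mulrCA.
have Hyy : \prod_(x <- t1) x = pi * (k * \prod_(x <- sz') x) by rewrite Hk -Psz mulrCA.
have [w [sy [Hw [Hsy [Ew Hsyl]]]]] := @divA R n Hat IH t1 pi _ Ht1 Hs1gt Hpi Hyy.
set v := y * \prod_(x <- sz') x in Hv.
have v0 : v != 0 by apply/eqP => v0; move: p120; rewrite Hv v0 mulr0 eqxx.
have vu : v \isn't a GRing.unit.
  apply/negP => vu.
  have : irreducible_elt (p1 * p2) by rewrite Hv mulrC; apply: irr_assoc.
  move=> [_ [_ Hf]]; case: (Hf p1 p2 erefl) => H; [move: p1u | move: p2u]; by rewrite H.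
have [sv [[Hsv Psv] Hsvl]] := @factor_nonunit _ v Hat v0 vu.
have pi0 : pi != 0 by case: Hpi.
have Eq : \prod_(x <- sv ++ s') x = w * \prod_(x <- sy ++ t2) x.
  apply: (mulfI pi0); rewrite !big_cat /= Psv mulrA -Hv E' -E12 Hyy Ew.
  by rewrite !mulrA.
have Hlt : (size (sy ++ t2) < n)%N.
  rewrite size_cat; move: Hsyl Hs12; clear; lia.
have H2 : size (sv ++ s') = size (sy ++ t2).
  by apply: (EL _ _ _ (atoms_cat Hsv Hs') (atoms_cat Hsy Ht2) Hw Eq); rewrite Hlt.
rewrite !size_cat in H2.
have Hm' : (n < (size s').+2)%N by [].
have Hsz2 : (size t').+1 = n by [].
move: H2 Hsyl Hs12 Hm' Hsvl; clear; lia.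
Qed.

Lemma z_hfd (R : idomainType) : atomic R -> Z_property R -> half_factorial R.
Proof.
move=> Hat HZ; split => // x x0 xu s t [Hs Ps] [Ht Pt].
case: (size s =P size t) => // Hne; exfalso.
apply: (no_bad Hat HZ (n := size t)); exists s, t, 1; split; first by [].
split; first by [].
split; first exact: unitr1.
by split; [rewrite Ps Pt mul1r | split].
Qed.


Theorem mainTheorem2 (R : idomainType) :
  atomic R -> integrally_closed R -> condition_C R ->
  (half_factorial R <-> Z_property R).
Proof.
move=> Hat _ HC; split; [exact: hfd_Z | exact: z_hfd].
Qed.
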